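(* Let $\Sigma$ be a graded alphabet, $L$ a finite tree language over $\Sigma$, and $A_L=(\Sigma,Q,\nu,\delta)$ the sequential subtree automaton of $L$. Then for every tree $r\in\mathrm{SubTreeSet}(L)$, $\Delta(r)=\{r\}$.
   Context: A graded alphabet is a finite set $\Sigma=\bigcup_{k\in\mathbb{N}}\Sigma_k$; $T_\Sigma$ is the set of trees $f(t_1,\ldots,t_k)$ with $f\in\Sigma_k$. A RWTA is $A=(\Sigma,Q,\nu,\delta)$ with $Q$ finite, $\nu:Q\to\mathbb{N}$, $\delta\subseteq\bigcup_k Q\times\Sigma_k\times Q^k$; $\delta(f,q_1,\ldots,q_k)=\{q\mid(q,f,q_1,\ldots,q_k)\in\delta\}$, extended to subsets by union over tuples; $\Delta(f(t_1,\ldots,t_k))=\delta(f,\Delta(t_1),\ldots,\Delta(t_k))$. For $t=f(t_1,\ldots,t_k)$, $\mathrm{SubTree}(t)=\{t\}\cup\bigcup_j\mathrm{SubTree}(t_j)$; $\mathrm{SubTreeSet}(L)=\bigcup_{t\in L}\mathrm{SubTree}(t)$; $\mathrm{SubTreeSeries}_t(s)$ is the number of nodes of $t$ whose subtree equals $s$ and $\mathrm{SubTreeSeries}_L=\sum_{t\in L}\mathrm{SubTreeSeries}_t$. The sequential subtree automaton of $L$ is $A_L=(\Sigma,Q,\nu,\delta)$ with $Q=\mathrm{SubTreeSet}(L)$, $\nu(t')=\mathrm{SubTreeSeries}_L(t')$, and for $f\in\Sigma_k$ and $t_1,\ldots,t_{k+1}\in Q$: $t_{k+1}\in\delta(f,t_1,\ldots,t_k)$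 iff $t_{k+1}=f(t_1,\ldots,t_k)$. *)

(* Defs.v *)
From HB Require Import structures.
From mathcomp Require Import all_boot.
Set Implicit Arguments. Unset Strict Implicit. Unset Printing Implicit Defensive.

(* A graded alphabet: a finite type of symbols Sigma with an arity (rank)
   function; Sigma_k = [pred f | arity f == k]. *)
Section Trees.
Variable Sigma : finType.

Inductive tree : Type := Node of Sigma & seq tree.

Fixpoint enc (t : tree) : GenTree.tree Sigma :=
  match t with Node f ts => GenTree.Node 0 (GenTree.Leaf f :: map enc ts) end.

Fixpoint dec (t : GenTree.tree Sigma) : option tree :=
  match t with
  | GenTree.Node _ (GenTree.Leaf f :: ts) => Some (Node f (pmap dec ts))
  | _ => None
  end.

Lemma encK : pcancel enc dec.
Proof.
rewrite /pcancel; fix IH 1; case=> f ts /=; congr (Some (Node f _)).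
elim: ts => [|t ts IHts] //=; by rewrite IH IHts.
Qed.

HB.instance Definition _ := Countable.copy tree (pcan_type encK).

Fixpoint children_ok (ar : Sigma -> nat) (t : tree) : bool :=
  match t with Node f ts => (size ts == ar f) && all (children_ok ar) ts end.

Definition wf_tree (ar : Sigma -> nat) (t : tree) := children_ok ar t.

Fixpoint subtrees (t : tree) : seq tree :=
  match t with Node f ts => t :: flatten (map subtrees ts) end.

Definition SubTreeSet (L : seq tree) : seq tree :=
  undup (flatten (map subtrees L)).

Definition SubTreeSeries_t (t s : tree) : nat := count_mem s (subtrees t).
Definition SubTreeSeries (L : seq tree) (s : tree) : nat :=
  \sum_(t <- L) SubTreeSeries_t t s.

(* RWTA over Sigma: finite state set, weight nu, transition relation
   delta q f [q_1;..;q_k] meaning (q,f,q_1,..,q_k) in delta. *)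
Record RWTA := {
  state : finType;
  nu : state -> nat;
  delta : state -> Sigma -> seq state -> Prop }.

Fixpoint Delta (A : RWTA) (t : tree) {struct t} : state A -> Prop :=
  match t with
  | Node f ts => fun q =>
      exists qs : seq (state A), @delta A q f qs /\
        (fix all2D (ts : seq tree) (qs : seq (state A)) {struct ts} : Prop :=
           match ts, qs with
           | [::], [::] => True
           | t :: ts', q :: qs' => @Delta A t q /\ all2D ts' qs'
           | _, _ => False
           end) ts qs
  end.

Definition subtree_automaton (ar : Sigma -> nat) (L : seq tree) : RWTA :=
  {| state := seq_sub (SubTreeSet L);
     nu := fun q => SubTreeSeries L (ssval q);
     delta := fun q f qs =>
       size qs = ar f /\ ssval q = Node f (map (@ssval _ _) qs) |}.

End Trees.

(* Main.v *)
Require Import Defs.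
From HB Require Import structures.
From mathcomp Require Import all_boot.

Section S.
Variable Sigma : finType.
Variable ar : Sigma -> nat.
Variable L : seq (tree Sigma).

Lemma fwd : forall t (q : state (subtree_automaton ar L)),
  @Delta Sigma (subtree_automaton ar L) t q -> ssval q = t.
Proof.
fix IH 1; case=> f ts q /= [qs [[_ Hq] Hall]].
rewrite Hq; congr (Node f _).
move: ts qs Hall {Hq}; fix IH2 1; case=> [|t ts] [|q' qs] //= [H1 H2].
by rewrite (IH _ _ H1) (IH2 _ _ H2).
Qed.

Lemma sub_child : forall (t : tree Sigma) f ts x, Node f ts \in subtrees t -> x \in ts ->
  x \in subtrees t.
Proof.
fix IH 1; case=> g us f ts x /=; rewrite inE => /orP [/eqP [_ ->] Hx|Hin].
  apply/orP; right; apply/flattenP; exists (subtrees x); first by apply: map_f.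
  by case: x {Hx} => ? ? /=; rewrite inE eqxx.
move=> Hx; apply/orP; right.
move: us Hin; fix IH2 1; case=> [|u us]; first by rewrite in_nil.
change (Node f ts \in subtrees u ++ flatten (map (@subtrees Sigma) us) -> x \in subtrees u ++ flatten (map (@subtrees Sigma) us)).
rewrite !mem_cat => /orP [H|H].
  by rewrite (IH _ _ _ _ H Hx).
by apply/orP; right; apply: IH2 H.
Qed.

Lemma sub_ok : forall (t s : tree Sigma), s \in subtrees t -> children_ok ar t -> children_ok ar s.
Proof.
fix IH 1; case=> g us s /=; rewrite inE => /orP [/eqP -> //|Hin] /andP [_ Ha].
move: us Hin Ha; fix IH2 1; case=> [|u us]; first by rewrite in_nil.
change (s \in subtrees u ++ flatten (map (@subtrees Sigma) us) -> children_ok ar u && all (children_ok ar) us -> children_ok ar s).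
rewrite mem_cat => /orP [H|H] /andP [H1 H2].
  exact: (IH _ _ H H1).
exact: (IH2 _ H H2).
Qed.

Lemma in_STS_child f ts x : Node f ts \in SubTreeSet L -> x \in ts -> x \in SubTreeSet L.
Proof.
rewrite /SubTreeSet !mem_undup => /flattenP [s /mapP [t Ht ->] Hs] Hx.
apply/flattenP; exists (subtrees t); first exact: map_f.
exact: (sub_child _ _ _ _ Hs Hx).
Qed.

Lemma STS_ok (HL : all (wf_tree ar) L) s : s \in SubTreeSet L -> children_ok ar s.
Proof.
rewrite /SubTreeSet mem_undup => /flattenP [s' /mapP [t Ht ->] Hs].
apply: (sub_ok _ _ Hs); exact: (allP HL t Ht).
Qed.

Lemma bwd (HL : all (wf_tree ar) L) : forall t, t \in SubTreeSet L ->
  forall (q : state (subtree_automaton ar L)), ssval q = t ->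
  @Delta Sigma (subtree_automaton ar L) t q.
Proof.
fix IH 1; case=> f ts Hin q Hq /=.
have Hok := STS_ok HL _ Hin.
have Hsub : forall x, x \in ts -> x \in SubTreeSet L by move=> x; exact: (in_STS_child _ _ _ Hin).
suff [qs [Hm Ha]] : exists qs : seq (state (subtree_automaton ar L)),
   map (@ssval _ _) qs = ts /\
   (fix all2D (ts : seq (tree Sigma)) (qs : seq (state (subtree_automaton ar L))) {struct ts} : Prop :=
           match ts, qs with
           | [::], [::] => True
           | t :: ts', q :: qs' => @Delta _ (subtree_automaton ar L) t q /\ all2D ts' qs'
           | _, _ => False
           end) ts qs.
  exists qs; split => //; split.
    move: Hok => /= /andP [/eqP <- _]; by rewrite -Hm size_map.
  by rewrite Hq Hm.
clear Hok Hq q Hin.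
move: ts Hsub; fix IH2 1; case=> [|t ts] Hsub; first by exists [::].
have Ht : t \in SubTreeSet L by apply: Hsub; rewrite inE eqxx.
have [qs [Hm Ha]] : exists qs : seq (state (subtree_automaton ar L)),
   map (@ssval _ _) qs = ts /\
   (fix all2D (ts : seq (tree Sigma)) (qs : seq (state (subtree_automaton ar L))) {struct ts} : Prop :=
           match ts, qs with
           | [::], [::] => True
           | t :: ts', q :: qs' => @Delta _ (subtree_automaton ar L) t q /\ all2D ts' qs'
           | _, _ => False
           end) ts qs.
  by apply: IH2 => x Hx; apply: Hsub; rewrite inE Hx orbT.
exists (@SeqSub _ _ t Ht :: qs); split; first by rewrite /= Hm.
split => //; exact: IH.
Qed.

End S.

Theorem lemma9 (Sigma : finType) (ar : Sigma -> nat) (L : seq (tree Sigma))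
  (HL : all (wf_tree ar) L) (r : tree Sigma) (Hr : r \in SubTreeSet L) :
  forall q : state (subtree_automaton ar L),
    @Delta Sigma (subtree_automaton ar L) r q <-> ssval q = r.
Proof.
move=> q; split; first exact: fwd.
exact: bwd.
Qed.
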